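(* Fix $\varepsilon\in\mathbb{R}^n_{\ge0}$ and $\delta\in(0,1]$, and let $\mathcal{C}^\star\subseteq\mathcal{R}$ be the set of all rankings that satisfy the $(\varepsilon,\delta)$-constraint. For any non-empty subset $\mathcal{C}\subseteq\mathcal{R}$ with $\mathcal{C}\ne\mathcal{C}^\star$, at least one of the following holds: (i) there exists a matrix $W\in\mathbb{R}^{m\times n}_{\ge0}$ such that $R_{\mathcal{C}}$ does not satisfy the $(\varepsilon,\delta)$-constraint; (ii) there exists a matrix $W\in\mathbb{R}^{m\times n}_{\ge0}$ such that $\langle R_{\mathcal{C}},W\rangle\le\langle R_{\mathcal{C}^\star},W\rangle\cdot(1-\frac1n)$.
   Context: $\mathcal{R}$ is the set of rankings: matrices $R\in\{0,1\}^{m\times n}$ with $\sum_{j} R_{ij}\le 1$ for every item $i\in[m]$ and $\sum_{i} R_{ij}=1$ for every position $j\in[n]$; $\langle R,W\rangle=\sum_{i,j}R_{ij}W_{ij}$. For a non-empty $\mathcal{C}\subseteq\mathcal{R}$ and utility matrix $W$, $R_{\mathcal{C}}:=\arg\max_{R\in\mathcal{C}}\langle R,W\rangle$. Noise model: given $P\in[0,1]^{m\times p}$, the groups $G_1,\dots,G_p\subseteq[m]$ are random with $\Pr[i\in G_\ell]=P_{i\ell}$, events concerning distinct items independent; given $U\in\mathbb{Z}_+^{n\times p}$, a ranking $R$ satisfies the $(\varepsilon,\delta)$-constraint if with probability at least $1-\delta$, $\sum_{i\in G_\ell}\sum_{j=1}^kR_{ij}\le U_{k\ell}(1+\varepsilon_k)$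 for all $k\in[n],\ell\in[p]$. *)

(* Defs.v *)
From mathcomp Require Import all_boot all_order all_algebra.
Set Implicit Arguments. Unset Strict Implicit. Unset Printing Implicit Defensive.
Import Order.TTheory GRing.Theory Num.Theory.
Local Open Scope ring_scope.

Section Defs.
Variables (R : realFieldType) (m n p : nat).

(* A ranking: 0/1 matrix, each item in at most one position, each position
   filled by exactly one item. *)
Definition is_ranking (X : 'M[R]_(m, n)) : Prop :=
  (forall i j, X i j = 0 \/ X i j = 1) /\
  (forall i : 'I_m, \sum_(j < n) X i j <= 1) /\
  (forall j : 'I_n, \sum_(i < m) X i j = 1).

Definition inner (X W : 'M[R]_(m, n)) : R :=
  \sum_(i < m) \sum_(j < n) X i j * W i j.

Definition is_argmax (C : 'M[R]_(m, n) -> Prop) (W X : 'M[R]_(m, n)) : Prop :=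
  C X /\ forall Y, C Y -> inner Y W <= inner X W.

(* A realization of the random groups: g i l = true iff item i is in G_l. *)
Definition outcome := {ffun 'I_m -> {ffun 'I_p -> bool}}.

(* Noise model: D i is the distribution of the membership vector of item i
   (over subsets of the p groups); distinct items are independent, so the
   probability of a realization is the product over items. *)
Definition is_noise_model (P : 'M[R]_(m, p))
    (D : 'I_m -> {ffun 'I_p -> bool} -> R) : Prop :=
  (forall i s, 0 <= D i s) /\
  (forall i, \sum_(s : {ffun 'I_p -> bool}) D i s = 1) /\
  (forall i l, \sum_(s : {ffun 'I_p -> bool} | s l) D i s = P i l).

Definition prob (D : 'I_m -> {ffun 'I_p -> bool} -> R) (E : pred outcome) : R :=
  \sum_(g : outcome | E g) \prod_(i < m) D i (g i).

(* For all k in [n] (0-indexed: top k+1 positions) and all groups l: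
   sum_{i in G_l} sum_{j <= k} X i j <= U k l * (1 + eps k). *)
Definition constraint_event (U : 'M[nat]_(n, p)) (eps : 'I_n -> R)
    (X : 'M[R]_(m, n)) : pred outcome :=
  fun g => [forall k : 'I_n, forall l : 'I_p,
    \sum_(i < m | g i l) \sum_(j < n | (j <= k)%N) X i j
      <= (U k l)%:R * (1 + eps k)].

Definition satisfies_constraint (D : 'I_m -> {ffun 'I_p -> bool} -> R)
    (U : 'M[nat]_(n, p)) (eps : 'I_n -> R) (delta : R) (X : 'M[R]_(m, n)) : Prop :=
  1 - delta <= prob D (constraint_event U eps X).

Definition Cstar D U eps delta : 'M[R]_(m, n) -> Prop :=
  fun X => is_ranking X /\ satisfies_constraint D U eps delta X.

End Defs.

(* Main.v *)
From Stdlib Require Import Classical.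
Require Import Defs.
From mathcomp Require Import all_boot all_order all_algebra.
Import Order.TTheory GRing.Theory Num.Theory.
Local Open Scope ring_scope.

Lemma inner_self (R : realFieldType) (m n : nat) (Y : 'M[R]_(m, n)) :
  is_ranking Y -> inner Y Y = n%:R.
Proof.
move=> [H01 [_ Hc]]; rewrite /inner exchange_big /=.
rewrite -[n in n%:R]card_ord -sumr_const; apply: eq_bigr => j _.
rewrite -(Hc j); apply: eq_bigr => i _.
by case: (H01 i j) => ->; rewrite ?mulr0 ?mulr1.
Qed.

Lemma inner_sym (R : realFieldType) (m n : nat) (X Y : 'M[R]_(m, n)) :
  inner X Y = inner Y X.
Proof. by rewrite /inner; apply: eq_bigr => i _; apply: eq_bigr => j _; rewrite mulrC. Qed.

Lemma inner_lt_aux (R : realFieldType) (m n : nat) (X Y : 'M[R]_(m, n)) i j :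
  is_ranking X -> is_ranking Y -> X i j = 1 -> Y i j = 0 -> inner X Y + 1 <= n%:R.
Proof.
move=> [X01 [_ Xc]] [Y01 [_ Yc]] Xij Yij.
have col : forall j', \sum_(i' < m) X i' j' * Y i' j' <= 1.
  move=> j'; rewrite -(Yc j'); apply: ler_sum => i' _.
  case: (X01 i' j') => ->; rewrite ?mul0r ?mul1r //.
  by case: (Y01 i' j') => ->.
have colj : \sum_(i' < m) X i' j * Y i' j <= 0.
  rewrite (bigD1 i) //= Xij Yij mulr0 add0r.
  have : \sum_(i' < m | i' != i) X i' j = 0.
    by move: (Xc j); rewrite (bigD1 i) //= Xij => /(congr1 (fun x => x - 1)); rewrite addrC addrK subrr.
  move=> h; rewrite -[X in _ <= X]h; apply: ler_sum => i' _.
  case: (X01 i' j) => ->; rewrite ?mul0r ?mul1r //.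
  by case: (Y01 i' j) => ->.
rewrite /inner exchange_big /= -[n in n%:R]card_ord -sumr_const.
rewrite (bigD1 j) //= [in X in _ <= X](bigD1 j) //= addrAC.
apply: lerD; last by apply: ler_sum => j' _; apply: col.
by rewrite -[1 in X in _ <= X]add0r lerD2r.
Qed.

Lemma inner_lt (R : realFieldType) (m n : nat) (X Y : 'M[R]_(m, n)) :
  is_ranking X -> is_ranking Y -> X <> Y -> inner X Y + 1 <= n%:R.
Proof.
move=> hX hY hne.
have [i [j hij]] : exists i j, X i j <> Y i j.
  apply: NNPP => hn; apply: hne; apply/matrixP => i j.
  by apply: NNPP => h; apply: hn; exists i, j.
case: hX => [X01 ?]; case: hY => [Y01 ?].
case: (X01 i j) => hx; case: (Y01 i j) => hy; rewrite hx hy in hij; try by [].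
  by rewrite inner_sym; apply: (@inner_lt_aux _ _ _ Y X i j).
by apply: (@inner_lt_aux _ _ _ X Y i j).
Qed.

Theorem proposition7p2 (R : realFieldType) (m n p : nat)
  (P : 'M[R]_(m, p)) (D : 'I_m -> {ffun 'I_p -> bool} -> R)
  (U : 'M[nat]_(n, p)) (eps : 'I_n -> R) (delta : R)
  (C : 'M[R]_(m, n) -> Prop) :
  (forall i l, 0 <= P i l <= 1) ->
  is_noise_model P D ->
  (forall k, 0 <= eps k) ->
  0 < delta <= 1 ->
  (forall X, C X -> is_ranking X) ->
  (exists X, C X) ->
  ~ (forall X, C X <-> Cstar D U eps delta X) ->
  (exists W : 'M[R]_(m, n), (forall i j, 0 <= W i j) /\
     forall X, is_argmax C W X -> ~ satisfies_constraint D U eps delta X)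
  \/
  (exists W : 'M[R]_(m, n), (forall i j, 0 <= W i j) /\
     forall X Xs, is_argmax C W X -> is_argmax (Cstar D U eps delta) W Xs ->
       inner X W <= inner Xs W * (1 - n%:R^-1)).
Proof.
move=> _ _ _ _ hCr _ hne.
have [X0 hX0] : exists X0, ~ (C X0 <-> Cstar D U eps delta X0).
  by apply: NNPP => h; apply: hne => X; apply: NNPP => h'; apply: h; exists X.
have nn01 : forall (Z : 'M[R]_(m, n)) i j, is_ranking Z -> 0 <= Z i j.
  by move=> Z i j [H _]; case: (H i j) => ->.
case: (classic (C X0)) => hC.
- have hr := hCr _ hC.
  have hs : ~ satisfies_constraint D U eps delta X0.
    by move=> hs; apply: hX0; split => // _; split.
  left; exists X0; split; first by move=> i j; apply: nn01.
  move=> X [hCX hmax].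
  have hX : X = X0.
    apply: NNPP => hne'.
    have := hmax _ hC; rewrite inner_self //.
    have := @inner_lt _ _ _ X X0 (hCr _ hCX) hr hne'.
    move=> h1 h2; have := le_trans (lerD h2 (lexx 1)) h1.
    by rewrite gerDl ler10.
  by rewrite hX.
- have hS : Cstar D U eps delta X0 by apply: NNPP => h; apply: hX0; split.
  have hr := hS.1.
  right; exists X0; split; first by move=> i j; apply: nn01.
  move=> X Xs [hCX _] [_ hmax].
  have hne' : X <> X0 by move=> e; apply: hC; rewrite -e.
  have h1 := @inner_lt _ _ _ X X0 (hCr _ hCX) hr hne'.
  have h2 := hmax _ hS; rewrite inner_self // in h2.
  have [n0|npos] := posnP n.
    by exfalso; apply: hne'; apply/matrixP => i j; have := leq_trans (ltn_ord j) (eq_leq n0); rewrite ltn0.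
  have hn : n%:R != 0 :> R by rewrite pnatr_eq0 -lt0n.
  apply: (le_trans (y := n%:R - 1)); first by rewrite lerBrDr.
  have -> : n%:R - 1 = n%:R * (1 - n%:R^-1) :> R by rewrite mulrBr mulr1 mulfV.
  apply: ler_wpM2r h2; rewrite subr_ge0 invf_le1 ?ler1n ?ltr0n //.
Qed.
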